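(* Let $G$ be a group with $\mathrm{cl}(G)<\infty$ and let $1\to\mathbb{Z}_2\to\tilde G\to G\to 1$ be any double cover (short exact sequence of groups with kernel of order $2$). Then $\mathrm{cl}(\tilde G)<\infty$.
   Context: $[a,b]=aba^{-1}b^{-1}$. For a group $G$ and $x\in[G,G]$, $\mathrm{cl}_G(x)$ is the least $k\ge0$ with $x$ a product of $k$ commutators of elements of $G$; the commutator width is $\mathrm{cl}(G)=\sup_{x\in[G,G]}\mathrm{cl}_G(x)\in\mathbb{Z}_{\ge0}\cup\{\infty\}$. *)

(* Defs.v *)
From Stdlib Require Import List Arith.
Import ListNotations.

(* A group: associative operation, left identity, left inverses
   (these axioms characterize groups). *)
Record group := Group {
  carrier :> Type;
  gmul : carrier -> carrier -> carrier;
  ginv : carrier -> carrier;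
  gone : carrier;
  gmulA : forall x y z, gmul x (gmul y z) = gmul (gmul x y) z;
  gmul1l : forall x, gmul gone x = x;
  gmulVl : forall x, gmul (ginv x) x = gone
}.

Arguments gmul {g} _ _.
Arguments ginv {g} _.
Arguments gone {g}.

Definition comm {G : group} (a b : G) : G :=
  gmul a (gmul b (gmul (ginv a) (ginv b))).

Definition prod_comms {G : group} (l : list (G * G)) : G :=
  fold_right (fun p acc => gmul (comm (fst p) (snd p)) acc) gone l.

Definition is_prod_of_comms {G : group} (k : nat) (x : G) : Prop :=
  exists l : list (G * G), length l = k /\ prod_comms l = x.

Definition in_derived {G : group} (x : G) : Prop :=
  exists k, is_prod_of_comms k x.

Definition cl_le {G : group} (x : G) (N : nat) : Prop :=
  exists k, k <= N /\ is_prod_of_comms k x.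

Definition finite_commutator_width (G : group) : Prop :=
  exists N : nat, forall x : G, in_derived x -> cl_le x N.

Definition is_hom {H G : group} (f : H -> G) : Prop :=
  forall x y : H, f (gmul x y) = gmul (f x) (f y).

(* 1 -> Z_2 -> Gt -> G -> 1 exact: p a surjective homomorphism whose kernel
   has exactly two elements (hence is cyclic of order 2). *)
Definition double_cover (Gt G : group) (p : Gt -> G) : Prop :=
  is_hom p /\ (forall y : G, exists x : Gt, p x = y) /\
  exists z : Gt, z <> gone /\ p z = gone /\
    (forall x : Gt, p x = gone -> x = gone \/ x = z).

(* Main.v *)
Require Import Defs.
From Stdlib Require Import List Arith Lia Classical.
Import ListNotations.

Section GL.
Variable G : group.
Implicit Types x y a b c : G.

Lemma mulVr x : gmul x (ginv x) = gone.
Proof.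
  assert (E : gmul (gmul x (ginv x)) (gmul x (ginv x)) = gmul x (ginv x)).
  { rewrite <- gmulA, (gmulA _ (ginv x) x), gmulVl, gmul1l. reflexivity. }
  rewrite <- (gmulVl _ (gmul x (ginv x))).
  rewrite <- E at 3. rewrite gmulA, gmulVl, gmul1l. reflexivity.
Qed.
Lemma mul1r x : gmul x gone = x.
Proof. rewrite <- (gmulVl _ x), gmulA, mulVr, gmul1l. reflexivity. Qed.
Lemma mulKl x y : gmul (ginv x) (gmul x y) = y.
Proof. rewrite gmulA, gmulVl, gmul1l; reflexivity. Qed.
Lemma mulKr x y : gmul x (gmul (ginv x) y) = y.
Proof. rewrite gmulA, mulVr, gmul1l; reflexivity. Qed.
Lemma cancl a b c : gmul a b = gmul a c -> b = c.
Proof. intro H. rewrite <- (mulKl a b), H, mulKl. reflexivity. Qed.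
Lemma cancr a b c : gmul b a = gmul c a -> b = c.
Proof. intro H. rewrite <- (mul1r b), <- (mulVr a), gmulA, H, <- gmulA, mulVr, mul1r. reflexivity. Qed.
Lemma inv_uniq x y : gmul x y = gone -> y = ginv x.
Proof. intro H. apply (cancl x). rewrite H, mulVr. reflexivity. Qed.
Lemma invM x y : ginv (gmul x y) = gmul (ginv y) (ginv x).
Proof. symmetry. apply inv_uniq. rewrite <- !gmulA, mulKr, mulVr. reflexivity. Qed.
Lemma invK x : ginv (ginv x) = x.
Proof. symmetry. apply inv_uniq. apply gmulVl. Qed.
Lemma comm_inv a b : ginv (comm a b) = comm b a.
Proof.
  symmetry. apply inv_uniq. unfold comm. rewrite <- !gmulA.
  rewrite !mulKl, mulKr, mulVr. reflexivity.
Qed.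

Lemma prod_app (l1 l2 : list (G*G)) :
  prod_comms (l1 ++ l2) = gmul (prod_comms l1) (prod_comms l2).
Proof.
  induction l1 as [|[a b] l IH]; simpl.
  - rewrite gmul1l; reflexivity.
  - unfold prod_comms in *; simpl in *. rewrite IH, gmulA. reflexivity.
Qed.

Lemma prod_inv (l : list (G*G)) :
  ginv (prod_comms l) = prod_comms (rev (map (fun q => (snd q, fst q)) l)).
Proof.
  induction l as [|[a b] l IH]; simpl.
  - symmetry; apply inv_uniq; apply gmul1l.
  - rewrite prod_app. change (ginv (gmul (comm a b) (prod_comms l)) =
      gmul (prod_comms (rev (map (fun q => (snd q, fst q)) l))) (gmul (comm b a) gone)).
    rewrite mul1r, invM, IH, comm_inv. reflexivity.
Qed.

Lemma derived_inv x : in_derived x -> in_derived (ginv x).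
Proof.
  intros [k [l [_ Hl]]]. subst. rewrite prod_inv. eexists; eexists; split; [reflexivity|reflexivity].
Qed.
Lemma derived_mul x y : in_derived x -> in_derived y -> in_derived (gmul x y).
Proof.
  intros [k [l [_ Hl]]] [k' [l' [_ Hl']]]. subst. rewrite <- prod_app.
  eexists; eexists; split; reflexivity.
Qed.
End GL.

Section Hom.
Variables H G : group.
Variable p : H -> G.
Hypothesis hp : is_hom p.

Lemma hom1 : p gone = gone.
Proof.
  apply (cancl _ (p gone)). rewrite <- hp, gmul1l, mul1r. reflexivity.
Qed.
Lemma homV x : p (ginv x) = ginv (p x).
Proof.
  apply (cancr _ (p x)). rewrite <- hp, gmulVl, gmulVl. apply hom1.
Qed.
Lemma hom_prod (l : list (H*H)) :
  p (prod_comms l) = prod_comms (map (fun q => (p (fst q), p (snd q))) l).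
Proof.
  induction l as [|[a b] l IH]; simpl. apply hom1.
  unfold comm. rewrite !hp, !homV, IH. reflexivity.
Qed.
Lemma lift_list (surj : forall y : G, exists x : H, p x = y) (l : list (G*G)) :
  exists l' : list (H*H), map (fun q => (p (fst q), p (snd q))) l' = l.
Proof.
  induction l as [|[a b] l [l' IH]]. exists []; reflexivity.
  destruct (surj a) as [a' Ha], (surj b) as [b' Hb].
  exists ((a',b')::l'). simpl. rewrite Ha, Hb, IH. reflexivity.
Qed.
End Hom.

Theorem mainTheorem7 (G Gt : group) (p : Gt -> G) :
  finite_commutator_width G ->
  double_cover Gt G p ->
  finite_commutator_width Gt.
Proof.
  intros [N HN] [hp [surj [z [_ [_ Hz]]]]].
  assert (Hm : exists m, forall x y : Gt, in_derived x -> in_derived y ->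
            x = gmul y z -> is_prod_of_comms m z).
  { destruct (classic (in_derived z)) as [[m Hm]|Hn].
    - exists m; intros; assumption.
    - exists 0; intros x y Hx Hy E. exfalso; apply Hn.
      replace z with (gmul (ginv y) x) by (rewrite E, mulKl; reflexivity).
      apply derived_mul; [apply derived_inv|]; assumption. }
  destruct Hm as [m Hm].
  exists (N + m). intros x Hx.
  assert (Hpx : in_derived (p x)).
  { destruct Hx as [k [l [_ Hl]]]. subst. rewrite (hom_prod _ _ p hp).
    eexists; eexists; split; reflexivity. }
  destruct (HN _ Hpx) as [k [Hk [l [Hlen Hl]]]].
  destruct (lift_list _ _ p surj l) as [l' Hl'].
  set (y := prod_comms l').
  assert (Hy : in_derived y) by (exists (length l'); exists l'; split; reflexivity).
  assert (Hyx : p (gmul (ginv y) x) = gone).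
  { rewrite hp, (homV _ _ p hp). unfold y. rewrite (hom_prod _ _ p hp), Hl', Hl.
    apply gmulVl. }
  assert (Hlen' : length l' = k) by (rewrite <- Hlen, <- Hl', length_map; reflexivity).
  destruct (Hz _ Hyx) as [E|E].
  - exists k; split; [lia|]. exists l'; split; [assumption|].
    apply (cancl _ (ginv y)). rewrite E. apply gmulVl.
  - assert (Exy : x = gmul y z) by (rewrite <- E, mulKr; reflexivity).
    destruct (Hm x y Hx Hy Exy) as [lz [Hlz Ez]].
    exists (k + m); split; [lia|]. exists (l' ++ lz); split.
    + rewrite length_app; lia.
    + rewrite prod_app, Ez, Exy. reflexivity.
Qed.
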